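(* Let $X$ be a compact metric space and $(f_n)_{n\ge1}$ a sequence of continuous maps $X\to X$ converging uniformly to a function $\phi\colon X\to X$. If $p\in\mathbb{N}^*$ is an idempotent ($p+p=p$), then $\phi^p\circ f_1^{q+p}=f_1^{q+p+p}=f_1^{q+p}$ for all $q\in\mathbb{N}^*$; that is, $f_1^{q+p}(x)$ is a fixed point of $\phi^p$ for every $q\in\mathbb{N}^*$ and every $x\in X$.
   Context: $\mathbb{N}=\{1,2,\dots\}$, $\mathbb{N}^*$ the free ultrafilters on $\mathbb{N}$. For $r\in\mathbb{N}^*$, $r\text{-}\lim_n x_n$ is the unique $y$ with $\{n:x_n\in V\}\in r$ for all neighbourhoods $V$ of $y$. $f_1^n=f_n\circ\cdots\circ f_1$, $f_1^r(x)=r\text{-}\lim_n f_1^n(x)$; $\phi^n$ is the $n$-fold composition and $\phi^r(x)=r\text{-}\lim_n\phi^n(x)$ for $r\in\mathbb{N}^*$. Addition of ultrafilters: $p+q=\{A:\{n:\{m:m+n\in A\}\in p\}\in q\}$. *)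

(* Defs.v *)
From HB Require Import structures.
From mathcomp Require Import all_boot all_order all_algebra.
From mathcomp Require Import all_classical all_reals all_analysis.
Set Implicit Arguments. Unset Strict Implicit. Unset Printing Implicit Defensive.
Import Order.TTheory GRing.Theory Num.Theory.
Local Open Scope classical_set_scope.
Local Open Scope ring_scope.

(* Free ultrafilters on the naturals: ultrafilters containing no finite set.
   (Index 0 is irrelevant: a free ultrafilter never sees a single point.) *)
Definition free_ultrafilter (p : set_system nat) : Prop :=
  UltraFilter p /\ (forall A : set nat, finite_set A -> ~ p A).

Definition usum (p q : set_system nat) : set_system nat :=
  [set A | q [set n | p [set m | A (m + n)%N]]].

Definition is_rlim {X : topologicalType} (r : set_system nat) (u : nat -> X) (y : X) : Prop :=
  forall V, nbhs y V -> r [set n | V (u n)].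

(* r-lim_n u_n, chosen with the default x0 (the r-limit exists and is unique
   in a compact Hausdorff space, so the default is never used there). *)
Definition rlim {X : topologicalType} (x0 : X) (r : set_system nat) (u : nat -> X) : X :=
  xget x0 [set y | is_rlim r u y].

(* f_1^n = f_n o ... o f_1  (f_1^0 = id) *)
Fixpoint fcomp {X : Type} (f : nat -> X -> X) (n : nat) : X -> X :=
  match n with
  | 0 => id
  | n'.+1 => f n'.+1 \o fcomp f n'
  end.

Definition fcomp_u {X : topologicalType} (f : nat -> X -> X) (r : set_system nat) (x : X) : X :=
  rlim x r (fun n => fcomp f n x).

Definition iter_u {X : topologicalType} (phi : X -> X) (r : set_system nat) (x : X) : X :=
  rlim x r (fun n => iter n phi x).

(* Main.v *)
Require Import Defs.
From HB Require Import structures.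
From mathcomp Require Import all_boot all_order all_algebra.
From mathcomp Require Import all_classical all_reals all_analysis.
From mathcomp Require Import ring lra.
Import Order.TTheory GRing.Theory Num.Theory.
Local Open Scope classical_set_scope.
Local Open Scope ring_scope.

Definition meets (F : set_system nat) :=
  forall A B, F A -> F B -> exists n, A n /\ B n.

Lemma ultra_meets (F : set_system nat) : UltraFilter F -> meets F.
Proof.
move=> FU A B hA hB.
have /filter_ex [n [? ?]] : F (A `&` B) by apply: filterI.
by exists n.
Qed.

Lemma usum_meets r s : meets r -> meets s -> meets (usum r s).
Proof.
move=> hr hs A B hA hB; have [n [h1 h2]] := hs _ _ hA hB.
have [m [? ?]] := hr _ _ h1 h2; by exists (m + n)%N.
Qed.

Lemma usum_assoc (q p : set_system nat) :
  usum (usum q p) p = usum q (usum p p).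
Proof.
rewrite /usum; apply/funext => A /=; congr (p _); apply/funext => n /=.
congr (p _); apply/funext => m /=; congr (q _); apply/funext => k /=.
by rewrite addnA.
Qed.

Lemma free_cofin (r : set_system nat) N : free_ultrafilter r -> r [set m | (N <= m)%N].
Proof.
move=> [rU rfree]; case: (in_ultra_setVsetC [set m | (N <= m)%N] rU) => // hc.
exfalso; apply: (rfree _ _ hc); apply: (sub_finite_set _ (finite_II N)).
by move=> m /= h; rewrite ltnNge; apply/negP.
Qed.

Section S.
Context {R : realType} {X : metricType R}.

Lemma rlim_uniq (F : set_system nat) (u : nat -> X) y1 y2 :
  meets F -> is_rlim F u y1 -> is_rlim F u y2 -> y1 = y2.
Proof.
move=> hm h1 h2; apply: (@metric_hausdorff R X) => A B hA hB.
have [n [? ?]] := hm _ _ (h1 _ hA) (h2 _ hB); by exists (u n).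
Qed.

Lemma rlimE x0 (F : set_system nat) (u : nat -> X) y :
  meets F -> is_rlim F u y -> rlim x0 F u = y.
Proof.
move=> hm hy; apply: xget_unique => // y' hy'; exact: rlim_uniq hm hy' hy.
Qed.

Lemma rlim_ex (F : set_system nat) (u : nat -> X) :
  compact [set: X] -> UltraFilter F -> exists y, is_rlim F u y.
Proof.
move=> cX FU.
have GU : UltraFilter (u @ F).
  split; first exact: fmap_proper_filter.
  move=> G GF sG; rewrite predeqE => A; split; last exact: sG.
  move=> GA; case: (in_ultra_setVsetC (u @^-1` A) FU) => // hc.
  have : G (~` A) by apply: sG.
  move=> GnA; have /filter_ex [? []] : G (A `&` (~` A)) by exact: filterI.
  by [].
rewrite compact_ultra in cX.
have [y [_ hy]] := cX _ GU (filterT).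
by exists y.
Qed.

Lemma rlim_sum (r s : set_system nat) (u v : nat -> X) y :
  Filter r -> Filter s ->
  (forall n, is_rlim r (fun m => u (m + n)%N) (v n)) -> is_rlim s v y ->
  is_rlim (usum r s) u y.
Proof.
move=> Fr Fs hv hy V /nbhs_ballP [e e0 He].
have e2 : 0 < e / 2 by rewrite divr_gt0.
rewrite /usum /=.
apply: filterS (hy _ (nbhsx_ballx y _ e2)) => n hn.
apply: filterS (hv n _ (nbhsx_ballx (v n) _ e2)) => m hm.
apply: He; rewrite /= (splitr e); exact: ball_triangle hn hm.
Qed.

End S.

Section K.
Context {R : realType} {X : metricType R}.

Lemma phi_cont (f : nat -> X -> X) (phi : X -> X) :
  (forall n : nat, (0 < n)%N -> continuous (f n)) ->
  (forall e : R, 0 < e -> exists N : nat,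
      forall n : nat, (N <= n)%N -> forall x : X, ball (phi x) e (f n x)) ->
  forall a e, 0 < e -> exists2 d, 0 < d & forall w, ball a d w -> ball (phi a) e (phi w).
Proof.
move=> hf hu a e e0.
have e3 : 0 < e / 3 by rewrite divr_gt0.
have [N HN] := hu _ e3.
have := hf N.+1 isT a _ (nbhsx_ballx (f N.+1 a) _ e3).
move=> /nbhs_ballP [d d0 Hd]; exists d => // w hw.
have h1 := HN N.+1 (leqnSn N) a.
have h2 : ball (f N.+1 a) (e/3) (f N.+1 w) := Hd w hw.
have h3 := ball_sym (HN N.+1 (leqnSn N) w).
have := ball_triangle (ball_triangle h1 h2) h3.
apply: le_ball; rewrite le_eqVlt; apply/orP; left; apply/eqP; by field.
Qed.

Lemma keyA (f : nat -> X -> X) (phi : X -> X) (r s : set_system nat) (x : X) :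
  compact [set: X] ->
  (forall a e, 0 < e -> exists2 d, 0 < d & forall w, ball a d w -> ball (phi a) e (phi w)) ->
  (forall e : R, 0 < e -> exists N : nat,
      forall n : nat, (N <= n)%N -> forall x : X, ball (phi x) e (f n x)) ->
  free_ultrafilter r -> free_ultrafilter s ->
  fcomp_u f (usum r s) x = iter_u phi s (fcomp_u f r x).
Proof.
move=> cX hc hu rF sF.
have rU := rF.1; have sU := sF.1.
have [z hz] := rlim_ex r (fun m => fcomp f m x) cX rU.
have [y hy] := rlim_ex s (fun n => iter n phi z) cX sU.
rewrite /iter_u /fcomp_u (rlimE _ _ _ _ (ultra_meets _ rU) hz) (rlimE _ _ _ _ (ultra_meets _ sU) hy).
apply: rlimE; first exact: usum_meets _ _ (ultra_meets _ rU) (ultra_meets _ sU).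
apply: (rlim_sum r s _ (fun n => iter n phi z)) => // n.
elim: n => [|n IH].
  have -> : (fun m => fcomp f (m + 0)%N x) = fun m => fcomp f m x.
    by apply/funext => m; rewrite addn0.
  exact: hz.
move=> V /nbhs_ballP [e e0 He] /=.
have e2 : 0 < e / 2 by rewrite divr_gt0.
have [d d0 Hd] := hc (iter n phi z) _ e2.
have [N HN] := hu _ e2.
apply: (filterS _ (filterI (free_cofin r N rF) (IH _ (nbhsx_ballx _ _ d0)))) => m [hm hb] /=.
rewrite addnS /=.
apply: He; rewrite /= (splitr e).
apply: ball_triangle (Hd _ hb) (HN _ _ _).
by rewrite (leq_trans hm) // -addnS leq_addr.
Qed.

End K.

Lemma fcomp_const {X : Type} (phi : X -> X) n y : fcomp (fun _ => phi) n y = iter n phi y.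
Proof. by elim: n => //= n ->. Qed.

Theorem corollary3p13 (R : realType) (X : metricType R)
  (f : nat -> X -> X) (phi : X -> X) :
  compact [set: X] ->
  (forall n : nat, (0 < n)%N -> continuous (f n)) ->
  (forall e : R, 0 < e -> exists N : nat,
      forall n : nat, (N <= n)%N -> forall x : X, ball (phi x) e (f n x)) ->
  forall p : set_system nat, free_ultrafilter p -> usum p p = p ->
  forall q : set_system nat, free_ultrafilter q ->
  forall x : X,
    iter_u phi p (fcomp_u f (usum q p) x) = fcomp_u f (usum (usum q p) p) x /\
    fcomp_u f (usum (usum q p) p) x = fcomp_u f (usum q p) x.
Proof.
move=> cX hf hu p pF pp q qF x.
have hc := phi_cont f phi hf hu.
have K1 := keyA f phi q p x cX hc hu qF pF.
have Kphi : forall (r s : set_system nat) y, free_ultrafilter r -> free_ultrafilter s ->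
    iter_u phi (usum r s) y = iter_u phi s (iter_u phi r y).
  move=> r s y rF sF.
  have hu' : forall e : R, 0 < e -> exists N : nat,
      forall n : nat, (N <= n)%N -> forall x : X, ball (phi x) e ((fun _ : nat => phi) n x).
    by move=> e e0; exists 0%N => n _ w; apply: ballxx.
  have := keyA (fun _ => phi) phi r s y cX hc hu' rF sF.
  have E : forall t, fcomp_u (fun _ => phi) t = iter_u phi t.
    move=> t; apply/funext => w; rewrite /fcomp_u /iter_u.
    by have -> : (fun n => fcomp (fun _ => phi) n w) = fun n => iter n phi w
      by apply/funext => n; exact: fcomp_const.
  by rewrite !E.
have E : usum (usum q p) p = usum q p by rewrite usum_assoc pp.
rewrite E K1 -Kphi // pp; split => //.
Qed.
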